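(* For every $(r,s,i,j)\in\mu^{-1}(0)^{rss}$, the closure of the orbit $B\cdot(r,s,i,j)$ contains a point of the form $(\operatorname{diag}(r),d,0,0)$ with $d$ a diagonal matrix.
   Context: $B\subset GL_n(\mathbb{C})$ is the group of invertible upper triangular matrices, $\mathfrak{b}$ the upper triangular matrices, $\mathfrak{n}^+$ strictly upper triangular, $\mathfrak{b}^*=\mathfrak{gl}_n/\mathfrak{n}^+$. $B$ acts on $\mathfrak{b}\times\mathfrak{b}^*\times\mathbb{C}^n\times(\mathbb{C}^n)^*$ by $b\cdot(r,s,i,j)=(brb^{-1},bsb^{-1},bi,jb^{-1})$, with moment map $\mu(r,s,i,j)=[r,s]+ij\bmod\mathfrak{n}^+$; $\mu^{-1}(0)^{rss}$ is the set of zeros of $\mu$ with $r$ having pairwise distinct diagonal entries. $\operatorname{diag}(r)$ is the diagonal matrix with the diagonal entries of $r$. *)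

(* Defs.v *)
(* The complex numbers are modelled as R[i] = complex R for
   R : realType (MathComp-Analysis reals; real_closed's `complex`). *)
From HB Require Import structures.
From mathcomp Require Import all_boot all_order all_algebra.
From mathcomp Require Import reals complex.
Set Implicit Arguments. Unset Strict Implicit. Unset Printing Implicit Defensive.
Import Order.TTheory GRing.Theory Num.Theory.
Local Open Scope ring_scope.

Definition upper_trig (F : nzRingType) (n : nat) (A : 'M[F]_n) : Prop :=
  forall k l : 'I_n, (l < k)%N -> A k l = 0.

Definition in_borel (F : comUnitRingType) (n : nat) (b : 'M[F]_n) : Prop :=
  b \in unitmx /\ upper_trig b.

(* Two matrices are equal modulo n^+ (strictly upper triangular matrices),
   i.e. they define the same element of b^* = gl_n / n^+. *)
Definition eq_mod_nplus (F : nzRingType) (n : nat) (A A' : 'M[F]_n) : Prop :=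
  forall k l : 'I_n, (l <= k)%N -> A k l = A' k l.

Definition mu_zero (F : comNzRingType) (n : nat) (r s : 'M[F]_n)
  (i : 'cV[F]_n) (j : 'rV[F]_n) : Prop :=
  eq_mod_nplus (r *m s - s *m r + i *m j) 0.

Definition rss (F : nzRingType) (n : nat) (r : 'M[F]_n) : Prop :=
  forall k l : 'I_n, k != l -> r k k != r l l.

Definition diag_of (F : nzRingType) (n : nat) (r : 'M[F]_n) : 'M[F]_n :=
  diag_mx (\row_k r k k).

(* Main.v *)
Require Import Defs.
From HB Require Import structures.
From mathcomp Require Import all_boot all_order all_algebra.
From mathcomp Require Import reals complex.
From mathcomp Require Import ring.
Set Implicit Arguments. Unset Strict Implicit. Unset Printing Implicit Defensive.
Import Order.TTheory GRing.Theory Num.Theory.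
Local Open Scope ring_scope.


Section Alg.
Variable F : fieldType.
Variable n' : nat.
Local Notation n := n'.+1.

Lemma upper_mul (A B : 'M[F]_n) : upper_trig A -> upper_trig B ->
  upper_trig (A * B) /\ forall k, (A * B) k k = A k k * B k k.
Proof.
move=> hA hB; split.
  move=> k l lk; rewrite -mulmxE mxE big1 // => m _.
  case: (ltnP m k) => mk; first by rewrite hA // mul0r.
  by rewrite hB ?mulr0 // (leq_trans lk mk).
move=> k; rewrite -mulmxE mxE (bigD1 k) //= big1 ?addr0 // => m mk.
case: (ltnP m k) => h; first by rewrite hA // mul0r.
by rewrite hB ?mulr0 // ltn_neqAle h andbT eq_sym.
Qed.

Lemma upper_prod (I : Type) (s : seq I) (P : pred I) (A : I -> 'M[F]_n) :
  (forall i, upper_trig (A i)) ->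
  upper_trig (\prod_(i <- s | P i) A i) /\
  forall k, (\prod_(i <- s | P i) A i) k k = \prod_(i <- s | P i) A i k k.
Proof.
move=> hA; elim: s => [|x s [IH1 IH2]].
  rewrite !big_nil; split => [k l lk|k]; rewrite mxE ?eqxx ?big_nil //.
  by case: eqP => // ekl; move: lk; rewrite ekl ltnn.
rewrite big_cons; case: ifP => Px; last by split => // k; rewrite big_cons Px.
have [h1 h2] := upper_mul (hA x) IH1; split => // k.
by rewrite h2 IH2 big_cons Px.
Qed.


Lemma prod_all_zero (r : 'M[F]_n) : upper_trig r ->
  \prod_(m < n) (r - (r m m)%:M) = 0.
Proof.
move=> hr; set N := fun m : 'I_n => r - (r m m)%:M.
have claim : forall p, (p <= n)%N -> forall a c : 'I_n, (c < p)%N ->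
    (\prod_(0 <= m < p) N (inord m)) a c = 0.
  elim=> [|p IH] pn a c cp //.
  rewrite big_nat_recr //= -mulmxE mxE big1 // => b _.
  case: (ltnP b p) => bp; first by rewrite IH ?mul0r // ltnW.
  rewrite /N !mxE.
  case: (ltnP c b) => cb.
    by rewrite hr // (_ : (b == c) = false) ?subr0 ?mulr0 //; apply/negP => /eqP ebc; move: cb; rewrite ebc ltnn.
  have ebp : nat_of_ord b = p by apply/eqP; rewrite eqn_leq bp andbT -ltnS (leq_ltn_trans cb cp).
  have ebc : b = c by apply/val_inj/eqP; rewrite /= eqn_leq cb ebp -ltnS cp.
  by rewrite -ebc eqxx -ebp inord_val mulr1n subrr mulr0.
rewrite (eq_bigr (fun m : 'I_n => N (inord m))); last by move=> m _; rewrite inord_val.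
rewrite -(big_mkord xpredT (fun m => N (inord m))).
by apply/matrixP => a c; rewrite [RHS]mxE claim.
Qed.


Definition Pk (r : 'M[F]_n) (k : 'I_n) : 'M[F]_n :=
  \prod_(m | m != k) (r - (r m m)%:M).

Lemma upper_shift (r : 'M[F]_n) (c : F) : upper_trig r -> upper_trig (r - c%:M).
Proof.
move=> hr k l lk; rewrite !mxE hr // (_ : (k == l) = false) ?subr0 //.
by apply/negP => /eqP ekl; move: lk; rewrite ekl ltnn.
Qed.

Lemma Pk_upper (r : 'M[F]_n) k : upper_trig r ->
  upper_trig (Pk r k) /\ forall j, Pk r k j j = \prod_(m | m != k) (r j j - r m m).
Proof.
move=> hr; have [h1 h2] := upper_prod (index_enum _) (fun m => m != k)
   (fun m => upper_shift (r m m) hr).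
split => // j; rewrite h2; apply: eq_bigr => m _; by rewrite !mxE eqxx mulr1n.
Qed.

Lemma horner_lin (r : 'M[F]_n) (c : F) : horner_mx r ('X - c%:P) = r - c%:M.
Proof. by rewrite rmorphB /= horner_mx_X horner_mx_C. Qed.

Lemma Pk_horner (r : 'M[F]_n) k :
  Pk r k = horner_mx r (\prod_(m | m != k) ('X - (r m m)%:P)).
Proof.
rewrite rmorph_prod; apply: eq_bigr => m _; exact/esym/horner_lin.
Qed.

Lemma Pk_eig (r : 'M[F]_n) k : upper_trig r ->
  Pk r k *m r = r k k *: Pk r k /\ r *m Pk r k = r k k *: Pk r k.
Proof.
move=> hr.
have H : horner_mx r (\prod_m ('X - (r m m)%:P)) = 0.
  by rewrite rmorph_prod -(prod_all_zero hr); apply: eq_bigr => m _; exact: horner_lin.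
rewrite (bigD1 k) //= in H.
have H1 : Pk r k * (r - (r k k)%:M) = 0.
  have -> : r - (r k k)%:M = horner_mx r ('X - (r k k)%:P) by exact/esym/horner_lin.
  by rewrite Pk_horner -rmorphM /= mulrC.
have H2 : (r - (r k k)%:M) * Pk r k = 0.
  have -> : r - (r k k)%:M = horner_mx r ('X - (r k k)%:P) by exact/esym/horner_lin.
  by rewrite Pk_horner -rmorphM /=.
split; apply/eqP; rewrite -subr_eq0.
  by rewrite -mul_mx_scalar -mulmxBr mulmxE H1.
by rewrite -mul_scalar_mx -mulmxBl mulmxE H2.
Qed.


Definition cc (r : 'M[F]_n) k := Pk r k k k.
Definition uu (r : 'M[F]_n) : 'M[F]_n := \matrix_(k, l) (Pk r k k l / cc r k).
Definition vv (r : 'M[F]_n) : 'M[F]_n := \matrix_(k, l) (Pk r l k l / cc r l).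

Section UV.
Variable r : 'M[F]_n.
Hypothesis hr : upper_trig r.
Hypothesis hs : rss r.

Lemma cc_neq0 k : cc r k != 0.
Proof.
have [_ h] := Pk_upper k hr; rewrite /cc h.
by apply/prodf_neq0 => m mk; rewrite subr_eq0 hs // eq_sym.
Qed.

Lemma uu_upper : upper_trig (uu r).
Proof. move=> k l lk; have [h _] := Pk_upper k hr; by rewrite mxE h // mul0r. Qed.

Lemma vv_upper : upper_trig (vv r).
Proof. move=> k l lk; have [h _] := Pk_upper l hr; by rewrite mxE h // mul0r. Qed.

Lemma uu_eig : uu r *m r = diag_of r *m uu r.
Proof.
apply/matrixP => k l; rewrite mul_diag_mx !mxE.
have [h _] := Pk_eig k hr.
transitivity ((Pk r k *m r) k l / cc r k).
  by rewrite mxE mulr_suml; apply: eq_bigr => m _; rewrite mxE mulrAC.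
by rewrite h !mxE mulrA.
Qed.

Lemma vv_eig : r *m vv r = vv r *m diag_of r.
Proof.
apply/matrixP => k l; rewrite mul_mx_diag !mxE.
have [_ h] := Pk_eig l hr.
transitivity ((r *m Pk r l) k l / cc r l).
  by rewrite mxE mulr_suml; apply: eq_bigr => m _; rewrite mxE mulrA.
by rewrite h !mxE -mulrA mulrC.
Qed.

Lemma uv1 : uu r *m vv r = 1%:M.
Proof.
apply/matrixP => k l; rewrite [RHS]mxE.
case: eqP => [<-|/eqP kl].
  rewrite mxE (bigD1 k) //= big1.
    by rewrite addr0 !mxE; have := cc_neq0 k; rewrite /cc => h; rewrite divff // mulr1.
  move=> m mk; rewrite !mxE.
  have [h _] := Pk_upper k hr.
  case: (ltnP m k) => mk'; first by rewrite h // mul0r mul0r.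
  rewrite (h m k) ?mul0r ?mulr0 //.
  by rewrite ltn_neqAle mk' andbT eq_sym.
have e1 : (uu r *m r *m vv r) k l = r k k * (uu r *m vv r) k l.
  by rewrite uu_eig -mulmxA mul_diag_mx !mxE.
have e2 : (uu r *m r *m vv r) k l = (uu r *m vv r) k l * r l l.
  by rewrite -mulmxA vv_eig mulmxA mul_mx_diag !mxE.
have : (r k k - r l l) * (uu r *m vv r) k l = 0.
  by rewrite mulrBl -e1 mulrC -e2 subrr.
by move/eqP; rewrite mulf_eq0 subr_eq0 (negbTE (hs kl)) /= => /eqP.
Qed.

End UV.

End Alg.

Lemma conj_lower (F : comNzRingType) n (u M v : 'M[F]_n) :
  upper_trig u -> upper_trig v -> eq_mod_nplus M 0 -> eq_mod_nplus (u *m M *m v) 0.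
Proof.
move=> hu hv hM k l lk; rewrite [RHS]mxE mxE big1 // => b _.
case: (ltnP l b) => lb; first by rewrite hv // mulr0.
rewrite mxE big1 ?mul0r // => a _.
case: (ltnP a k) => ak; first by rewrite hu // mul0r.
by rewrite hM ?mxE ?mulr0 // (leq_trans lb (leq_trans lk ak)).
Qed.

Lemma le_sum_term (F : numDomainType) (I : finType) (f : I -> F) k :
  (forall x, 0 <= f x) -> f k <= \sum_x f x.
Proof.
move=> h; rewrite (bigD1 k) //= lerDl; exact: sumr_ge0.
Qed.

Lemma le4 (F : numDomainType) (x b c d : F) : 0 <= b -> 0 <= c -> 0 <= d ->
  (x <= b) || (x <= c) || (x <= d) -> x <= 1 + b + c + d.
Proof.
move=> hb hc hd /orP [/orP [h|h]|h].
- have -> : 1 + b + c + d = b + (1 + c + d) by ring.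
  by apply: le_trans h _; rewrite lerDl !addr_ge0.
- have -> : 1 + b + c + d = c + (1 + b + d) by ring.
  by apply: le_trans h _; rewrite lerDl !addr_ge0.
- have -> : 1 + b + c + d = d + (1 + b + c) by ring.
  by apply: le_trans h _; rewrite lerDl !addr_ge0.
Qed.



Lemma main_gen (F : numFieldType) (n' : nat)
  (r s : 'M[F]_n'.+1) (i : 'cV[F]_n'.+1) (j : 'rV[F]_n'.+1) :
  upper_trig r -> mu_zero r s i j -> rss r ->
  exists d : 'M[F]_n'.+1, is_diag_mx d /\
    forall eps : F, 0 < eps ->
      exists b : 'M[F]_n'.+1, in_borel b /\
        (forall k l : 'I_n'.+1,
           `|(b *m r *m invmx b) k l - diag_of r k l| < eps) /\
        (forall k l : 'I_n'.+1, (l <= k)%N ->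
           `|(b *m s *m invmx b) k l - d k l| < eps) /\
        (forall k : 'I_n'.+1, `|(b *m i) k 0 | < eps) /\
        (forall k : 'I_n'.+1, `|(j *m invmx b) 0 k| < eps).
Proof.
move=> hr hmu hs.
set u := uu r; set v := vv r.
have huv : u *m v = 1%:M by exact: uv1.
set s' := u *m s *m v; set i' := u *m i; set j' := j *m v.
have mu' : forall k l : 'I_n'.+1, (l <= k)%N ->
    r k k * s' k l - s' k l * r l l + i' k 0 * j' 0 l = 0.
  move=> k l lk.
  have e1 : u *m (r *m s) *m v = diag_of r *m s'.
    by rewrite mulmxA uu_eig // /s' !mulmxA.
  have e2 : u *m (s *m r) *m v = s' *m diag_of r.
    by rewrite /s' -!mulmxA vv_eig.
  have e3 : u *m (i *m j) *m v = i' *m j' by rewrite /i' /j' !mulmxA.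
  have E : diag_of r *m s' - s' *m diag_of r + i' *m j'
         = u *m (r *m s - s *m r + i *m j) *m v.
    by rewrite mulmxDr mulmxBr mulmxDl mulmxBl e1 e2 e3.
  have := conj_lower (uu_upper hr) (vv_upper hr) hmu lk.
  rewrite -/u -/v -E /diag_of mul_diag_mx mul_mx_diag !mxE big_ord1 !mxE => ->.
  by [].
exists (diag_of s'); split.
  exact: diag_mx_is_diag.
move=> eps eps0.
set M := 1 + \sum_k `|i' k 0| + \sum_k `|j' 0 k| + \sum_k \sum_l `|s' k l|.
have M0 : 0 < M.
  rewrite /M -!addrA; apply: ltr_wpDr; last exact: ltr01.
  by rewrite !addr_ge0 //; apply: sumr_ge0 => *; rewrite ?sumr_ge0.
set del := eps / (M + eps).
have Me0 : 0 < M + eps by rewrite addr_gt0.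
have del0 : 0 < del by rewrite divr_gt0.
have del1 : del <= 1 by rewrite /del ler_pdivrMr // mul1r lerDr ltW.
have delM : forall y : F, `|y| <= M -> del * `|y| < eps.
  move=> y hy; have h1 : del * `|y| <= del * M by rewrite ler_wpM2l // ltW.
  apply: le_lt_trans h1 _.
  by rewrite /del mulrAC ltr_pdivrMr // ltr_pM2l // ltrDl.
have sA : 0 <= \sum_k `|i' k 0| by apply: sumr_ge0.
have sB : 0 <= \sum_k `|j' 0 k| by apply: sumr_ge0.
have sC : 0 <= \sum_k \sum_l `|s' k l| by apply: sumr_ge0 => k _; apply: sumr_ge0.
have bi : forall k, `|i' k 0| <= M.
  move=> k; apply: le4 => //; apply/orP; left; apply/orP; left.
  by have := @le_sum_term _ _ (fun k => `|i' k 0|) k; apply => x.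
have bj : forall k, `|j' 0 k| <= M.
  move=> k; apply: le4 => //; apply/orP; left; apply/orP; right.
  by have := @le_sum_term _ _ (fun k => `|j' 0 k|) k; apply => x.
have bs : forall k l, `|s' k l| <= M.
  move=> k l; apply: le4 => //; apply/orP; right.
  apply: le_trans (_ : \sum_l `|s' k l| <= _).
    by have := @le_sum_term _ _ (fun l => `|s' k l|) l; apply => x.
  by have := @le_sum_term _ _ (fun k => \sum_l `|s' k l|) k; apply => x; apply: sumr_ge0.
set tv := fun k => if i' k 0 != 0 then del else if j' 0 k != 0 then del^-1 else 1.
have tv0 : forall k, tv k != 0.
  move=> k; rewrite /tv; case: ifP => _; first by rewrite gt_eqF.
  by case: ifP => _; rewrite ?invr_eq0 ?gt_eqF ?oner_eq0.
set t := diag_mx (\row_k tv k); set t' := diag_mx (\row_k (tv k)^-1).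
set b := t *m u; set b' := v *m t'.
have hconj : forall X, b *m X *m b' = t *m (u *m X *m v) *m t'.
  by move=> X; rewrite /b /b' !mulmxA.
have hent : forall X k l, (t *m X *m t') k l = tv k * X k l * (tv l)^-1.
  by move=> X k l; rewrite mul_mx_diag mxE mul_diag_mx !mxE.
have bb' : b *m b' = 1%:M.
  rewrite /b /b' mulmxA -(mulmxA t) huv mulmx1.
  apply/matrixP => k l; rewrite mul_diag_mx !mxE.
  by case: eqP => [->|_]; rewrite ?mulr1n ?divff ?tv0 ?mulr0n ?mulr0.
have [ub _] := mulmx1_unit bb'.
have ib : invmx b = b' by rewrite -(mulKmx ub b') bb' mulmx1.
have hr' : u *m r *m v = diag_of r by rewrite uu_eig // -mulmxA huv mulmx1.
have diag_ent : forall (x : 'rV[F]_n'.+1) k l, diag_mx x k l = x 0 k *+ (k == l).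
  by move=> x k l; rewrite mxE.
exists b; rewrite ib; split; [split => //|split; [|split; [|split]]].
- move=> k l lk; rewrite /b mul_diag_mx mxE (uu_upper hr) // mulr0 //.
- move=> k l; rewrite hconj hr' hent /diag_of !diag_ent !mxE.
  case: eqP => [->|_]; last by rewrite !mulr0n mulr0 mul0r subrr normr0.
  by rewrite !mulr1n mulrC mulrA mulVf ?tv0 // mul1r subrr normr0.
- move=> k l lk; rewrite hconj -/s'; clearbody del M s'; rewrite hent /diag_of !diag_ent !mxE.
  case: eqP => [->|kl].
    by rewrite !mulr1n mulrC mulrA mulVf ?tv0 // mul1r subrr normr0.
  rewrite mulr0n subr0.
  have [->|s0] := eqVneq (s' k l) 0; first by rewrite mulr0 mul0r normr0.
  have hkl := mu' k l lk.
  have hll := mu' l l (leqnn l).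
  rewrite mulrC subrr add0r in hll.
  have hij : i' k 0 * j' 0 l != 0.
    apply/eqP => h0; rewrite h0 addr0 [s' k l * _]mulrC -mulrBl in hkl.
    move/eqP: hkl; rewrite mulf_eq0 (negbTE s0) orbF subr_eq0.
    by rewrite (negbTE (hs k l (introN eqP kl))).
  move: hij; rewrite mulf_eq0 negb_or => /andP [ik jl].
  have il : i' l 0 = 0.
    by move/eqP: hll; rewrite mulf_eq0 (negbTE jl) orbF => /eqP.
  rewrite /tv ik il eqxx /= jl invrK.
  rewrite !normrM (gtr0_norm del0) mulrC mulrA.
  apply: le_lt_trans (delM _ (bs k l)).
  by rewrite mulrAC ler_piMr // mulr_ge0 // ltW.
- move=> k; rewrite /b -mulmxA -/i' mul_diag_mx mxE [X in X * _]mxE /tv.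
  case: ifP => [_|/negbFE/eqP ->]; last by rewrite mulr0 normr0.
  by rewrite normrM (gtr0_norm del0) delM.
- move=> k; rewrite /b' mulmxA -/j' mul_mx_diag mxE [X in _ * X]mxE /tv.
  case: ifP => [ik|_].
    have hkk := mu' k k (leqnn k); rewrite mulrC subrr add0r in hkk.
    move/eqP: hkk; rewrite mulf_eq0 (negbTE ik) /= => /eqP ->.
    by rewrite mul0r normr0.
  case: ifP => [_|/negbFE/eqP ->]; last by rewrite mul0r normr0.
  by rewrite invrK normrM (gtr0_norm del0) mulrC delM.
Qed.

Unset Implicit Arguments.
Set Strict Implicit.
Theorem mainTheorem18 (R : realType) (n : nat)
  (r s : 'M[R[i]]_n) (i : 'cV[R[i]]_n) (j : 'rV[R[i]]_n) :
  upper_trig r -> mu_zero r s i j -> rss r ->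
  exists d : 'M[R[i]]_n, is_diag_mx d /\
    forall eps : R[i], 0 < eps ->
      exists b : 'M[R[i]]_n, in_borel b /\
        (forall k l : 'I_n,
           `|(b *m r *m invmx b) k l - diag_of r k l| < eps) /\
        (forall k l : 'I_n, (l <= k)%N ->
           `|(b *m s *m invmx b) k l - d k l| < eps) /\
        (forall k : 'I_n, `|(b *m i) k 0 | < eps) /\
        (forall k : 'I_n, `|(j *m invmx b) 0 k| < eps).
Proof.
case: n r s i j => [|n'] r s i j hr hmu hs; last exact: main_gen.
exists 0; split; first by apply/is_diag_mxP => -[].
move=> eps _; exists 1%:M; split; last by split; [case|split; [case|split; case]].
by split; [exact: unitmx1|case].
Qed.
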